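(* A $(\circ,\wedge,\mathsf{A})$-algebra $\mathfrak{A}$ is completely representable by partial functions if and only if $\mathfrak{A}$ is representable by partial functions, $\mathfrak{A}$ is atomic, and composition in $\mathfrak{A}$ is completely left-distributive over joins.
   Context: A $(\circ,\wedge,\mathsf{A})$-algebra is a set with two binary operations $\circ,\wedge$ and one unary operation $\mathsf{A}$. An algebra of partial functions of this signature is a set of partial functions, with base $X$ the union of all their domains and ranges, closed under: composition $f\circ g=\{(x,z)\mid \exists y\,(x,y)\in f,(y,z)\in g\}$ (apply $f$ first, then $g$); intersection; antidomain $\mathsf{A}(f)=\{(x,x)\mid x\in X, x\notin\mathrm{dom}(f)\}$. A representation by partial functions is an isomorphism onto such an algebra. The order is $a\le b\iff a\wedge b=a$, with least element $0=\mathsf{A}(a)\circ a$. An atom is a minimal nonzero element; $\mathfrak{A}$ is atomic if every nonzero element is above an atom. A representation $\theta$ is complete if for every $S$ with $\bigvee S$ existing, $\theta(\bigvee S)=\bigcup\theta[S]$ (equivalently, for every nonempty $S$ with $\bigwedge S$ existing, $\theta(\bigwedge S)=\bigcap\theta[S]$); $\mathfrak{A}$ is completely representable if it has a complete representation. Composition is completely left-distributive over joins if for every $a$ and every $S$ with $\bigvee S$ existing, $\bigvee\{a\circ s\mid s\in S\}$ exists and equals $a\circ\bigvee S$. *)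

(* Defs.v *)
(* A (comp, meet, antidom)-algebra is given by a carrier type T
   with operations comp, meet : T -> T -> T and antidom : T -> T.
   comp f g = "apply f first, then g". *)

Section Defs.
Context {T : Type} (comp meet : T -> T -> T) (antidom : T -> T).

Definition le (a b : T) : Prop := meet a b = a.

Definition is_zero (a : T) : Prop := a = comp (antidom a) a.

Definition is_atom (a : T) : Prop :=
  ~ is_zero a /\ forall b, le b a -> is_zero b \/ b = a.

Definition atomic : Prop :=
  forall a, ~ is_zero a -> exists b, is_atom b /\ le b a.

Definition is_join (S : T -> Prop) (j : T) : Prop :=
  (forall s, S s -> le s j) /\
  (forall u, (forall s, S s -> le s u) -> le j u).

Definition comp_complete_left_distributive : Prop :=
  forall (a : T) (S : T -> Prop) (j : T), is_join S j ->
    is_join (fun t => exists s, S s /\ t = comp a s) (comp a j).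

Definition is_partial_function {U : Type} (R : U -> U -> Prop) : Prop :=
  forall x y z, R x y -> R x z -> y = z.

Definition is_representation {U : Type} (theta : T -> U -> U -> Prop) : Prop :=
  (forall a, is_partial_function (theta a)) /\
  (forall a b, (forall x y, theta a x y <-> theta b x y) -> a = b) /\
  (forall a b x z, theta (comp a b) x z <-> exists y, theta a x y /\ theta b y z) /\
  (forall a b x y, theta (meet a b) x y <-> theta a x y /\ theta b x y) /\
  (forall a x y, theta (antidom a) x y <-> x = y /\ ~ exists z, theta a x z).

Definition representable : Prop :=
  exists (U : Type) (theta : T -> U -> U -> Prop), is_representation theta.

Definition is_complete_representation {U : Type} (theta : T -> U -> U -> Prop)
  : Prop :=
  is_representation theta /\
  forall (S : T -> Prop) (j : T), is_join S j ->
    forall x y, theta j x y <-> exists s, S s /\ theta s x y.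

Definition completely_representable : Prop :=
  exists (U : Type) (theta : T -> U -> U -> Prop),
    is_complete_representation theta.

End Defs.

(* Main.v *)
Require Import Defs.
From Stdlib Require Import Classical ProofIrrelevance.

Section Rep.
Context {T : Type} (comp meet : T -> T -> T) (antidom : T -> T).
Context {U : Type} (R : T -> U -> U -> Prop).
Context (H : is_representation comp meet antidom R).

Let Hf : forall a, is_partial_function (R a). Proof. apply H. Qed.
Let Hext : forall a b, (forall x y, R a x y <-> R b x y) -> a = b. Proof. apply H. Qed.
Let Hc : forall a b x z, R (comp a b) x z <-> exists y, R a x y /\ R b y z. Proof. apply H. Qed.
Let Hm : forall a b x y, R (meet a b) x y <-> R a x y /\ R b x y. Proof. apply H. Qed.
Let Ha : forall a x y, R (antidom a) x y <-> x = y /\ ~ exists z, R a x z. Proof. apply H. Qed.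

Lemma fnE a x y z : R a x y -> R a x z -> y = z.
Proof. intros; eapply (Hf a); eauto. Qed.

Lemma zeroE a : is_zero comp antidom a <-> forall x y, ~ R a x y.
Proof.
  split.
  - intros Hz x y Hr. unfold is_zero in Hz. rewrite Hz in Hr.
    apply Hc in Hr. destruct Hr as [w [H1 H2]]. apply Ha in H1. destruct H1 as [-> H1].
    apply H1. eauto.
  - intros Hn. unfold is_zero. apply Hext. intros x y; split; intros Hr.
    + exfalso; eapply Hn; eauto.
    + apply Hc in Hr. destruct Hr as [w [H1 H2]]. apply Ha in H1. destruct H1 as [-> H1].
      exfalso; apply H1; eauto.
Qed.

Lemma nonzero a : ~ is_zero comp antidom a -> exists x y, R a x y.
Proof.
  intros Hn. apply NNPP. intros Hne. apply Hn. apply zeroE.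
  intros x y Hr. apply Hne. eauto.
Qed.

Lemma leE a b : le meet a b <-> forall x y, R a x y -> R b x y.
Proof.
  split.
  - intros Hl x y Hr. unfold le in Hl. rewrite <- Hl in Hr. apply Hm in Hr. tauto.
  - intros Hi. unfold le. apply Hext. intros x y. rewrite Hm. split; [tauto|]. intros Hr; split; auto.
Qed.

Lemma diffE a u x y :
  R (comp (antidom (meet a u)) a) x y <-> R a x y /\ ~ R u x y.
Proof.
  rewrite Hc. split.
  - intros [w [H1 H2]]. apply Ha in H1. destruct H1 as [<- H1]. split; auto.
    intros Hu. apply H1. exists y. apply Hm. auto.
  - intros [H1 H2]. exists x. split; auto. apply Ha. split; auto.
    intros [z Hz]. apply Hm in Hz. destruct Hz as [Hz1 Hz2].
    assert (z = y) by exact (Hf a x z y Hz1 H1). subst z. contradiction.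
Qed.

Lemma adomE c d x y :
  R (comp (antidom c) d) x y <-> (~ exists z, R c x z) /\ R d x y.
Proof.
  rewrite Hc. split.
  - intros [w [H1 H2]]. apply Ha in H1. destruct H1 as [<- H1]. auto.
  - intros [H1 H2]. exists x. split; auto. apply Ha. auto.
Qed.

Lemma domE c d x y :
  R (comp (antidom (antidom c)) d) x y <-> (exists z, R c x z) /\ R d x y.
Proof.
  rewrite adomE. split.
  - intros [H1 H2]. split; auto. apply NNPP. intros Hn. apply H1.
    exists x. apply Ha. auto.
  - intros [[z Hz] H2]. split; auto. intros [w Hw]. apply Ha in Hw.
    destruct Hw as [_ Hw]. eauto.
Qed.

Lemma atom_below_join S j a :
  is_join meet S j -> is_atom comp meet antidom a -> le meet a j ->
  exists s, S s /\ le meet a s.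
Proof.
  intros [Hub Hlub] [Hnz Hat] Haj.
  apply NNPP. intros Hno.
  assert (Hdisj : forall s, S s -> forall x y, R s x y -> ~ R a x y).
  { intros s Hs x y Hsr Har. apply Hno. exists s. split; auto.
    destruct (Hat (meet a s)) as [Hz | Heq].
    - apply leE. intros p q Hr. apply Hm in Hr. tauto.
    - exfalso. pose proof (proj1 (zeroE _) Hz) as Hz0; clear Hz; rename Hz0 into Hz. apply (Hz x y). apply Hm. auto.
    - unfold le. exact Heq. }
  set (u := comp (antidom (meet j a)) j).
  assert (Hju : le meet j u).
  { apply Hlub. intros s Hs. apply leE. intros x y Hr. unfold u. apply diffE.
    split. - eapply leE; [apply Hub; exact Hs | exact Hr]. - eapply Hdisj; eauto. }
  apply Hnz. apply zeroE. intros x y Hr.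
  assert (Hj : R j x y) by (eapply leE; eauto).
  assert (Hu : R u x y) by (eapply leE; eauto).
  apply diffE in Hu. tauto.
Qed.

Lemma join_atoms a :
  atomic comp meet antidom ->
  is_join meet (fun b => is_atom comp meet antidom b /\ le meet b a) a.
Proof.
  intros Hat. split.
  - intros s [_ Hs]. exact Hs.
  - intros u Hu. apply leE. intros x y Hr. apply NNPP. intros Hnu.
    set (d := comp (antidom (meet a u)) a).
    assert (Hd : ~ is_zero comp antidom d).
    { intros Hz. pose proof (proj1 (zeroE _) Hz) as Hz0; clear Hz; rename Hz0 into Hz. apply (Hz x y). apply diffE. auto. }
    destruct (Hat d Hd) as [b [Hb Hbd]].
    destruct (nonzero b (proj1 Hb)) as [p [q Hpq]].
    assert (Hdp : R d p q) by (eapply leE; eauto).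
    apply diffE in Hdp. destruct Hdp as [Hap Hup].
    apply Hup. eapply leE; [apply Hu | exact Hpq]. split; auto.
    apply leE. intros r t Hrt. assert (R d r t) by (eapply leE; eauto).
    apply diffE in H0. tauto.
Qed.

Lemma atom_restrict al a x y z :
  is_atom comp meet antidom al -> R al x y -> R a x z ->
  is_atom comp meet antidom (comp (antidom (antidom al)) a).
Proof.
  intros [Hnz Hat] Hxy Hxz. split.
  - intros Hz. pose proof (proj1 (zeroE _) Hz) as Hz0; clear Hz; rename Hz0 into Hz. apply (Hz x z). apply domE. eauto.
  - intros c Hc'. destruct (classic (is_zero comp antidom c)) as [Hz|Hnc]; [left; auto|right].
    destruct (nonzero c Hnc) as [p [q Hpq]].
    assert (Hpq' : R (comp (antidom (antidom al)) a) p q) by (eapply leE; eauto).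
    apply domE in Hpq'. destruct Hpq' as [[w Hw] Hpa].
    destruct (Hat (comp (antidom (antidom c)) al)) as [Hz | Heq].
    + apply leE. intros r t Hr. apply domE in Hr. tauto.
    + exfalso. pose proof (proj1 (zeroE _) Hz) as Hz0; clear Hz; rename Hz0 into Hz. apply (Hz p w). apply domE. eauto.
    + assert (Hdom : forall r t, R al r t -> exists v, R c r v).
      { intros r t Hr. rewrite <- Heq in Hr. apply domE in Hr. tauto. }
      apply Hext. intros r t. split.
      * intros Hr. eapply leE; eauto.
      * intros Hr. apply domE in Hr. destruct Hr as [[v Hv] Hra].
        destruct (Hdom r v Hv) as [e He].
        assert (Hea : R (comp (antidom (antidom al)) a) r e) by (eapply leE; eauto).
        apply domE in Hea. destruct Hea as [_ Hea].
        assert (e = t) by (eapply fnE; eauto). subst. auto.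
Qed.

Definition P (x : U) : Prop :=
  forall a, (exists z, R a x z) ->
    exists b, is_atom comp meet antidom b /\ le meet b a /\ exists z, R b x z.

Lemma P_atom al x y : is_atom comp meet antidom al -> R al x y -> P x.
Proof.
  intros Hal Hxy a [z Hz]. exists (comp (antidom (antidom al)) a).
  split; [eapply atom_restrict; eauto|split].
  - apply leE. intros r t Hr. apply domE in Hr. tauto.
  - exists z. apply domE. eauto.
Qed.

Lemma P_closed b x y :
  atomic comp meet antidom -> comp_complete_left_distributive comp meet ->
  P x -> R b x y -> P y.
Proof.
  intros Hat Hd Hx Hb a [w Hw].
  pose proof (Hd b _ a (join_atoms a Hat)) as J.
  destruct (Hx (comp b a)) as [g [Hg [Hga [v Hv]]]].
  { exists w. apply Hc. eauto. }
  destruct (atom_below_join _ _ g J Hg Hga) as [t [[s [[Hs Hsa] ->]] Hgt]].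
  exists s. split; auto. split; auto.
  assert (Hbs : R (comp b s) x v) by (eapply leE; eauto).
  apply Hc in Hbs. destruct Hbs as [y' [Hby Hsy]].
  assert (y' = y) by (eapply fnE; eauto). subst. eauto.
Qed.

Lemma sep a b :
  atomic comp meet antidom ->
  (forall x y, P x -> R a x y -> R b x y) -> forall x y, R a x y -> R b x y.
Proof.
  intros Hat Hi x y Hr. apply NNPP. intros Hnb.
  set (d := comp (antidom (meet a b)) a).
  assert (Hd : ~ is_zero comp antidom d).
  { intros Hz. pose proof (proj1 (zeroE _) Hz) as Hz0; clear Hz; rename Hz0 into Hz. apply (Hz x y). apply diffE. auto. }
  destruct (Hat d Hd) as [g [Hg Hgd]].
  destruct (nonzero g (proj1 Hg)) as [p [q Hpq]].
  assert (Hdp : R d p q) by (eapply leE; eauto).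
  apply diffE in Hdp. destruct Hdp as [Hap Hbp].
  apply Hbp. apply Hi; auto. eapply P_atom; eauto.
Qed.

End Rep.

Theorem mainTheorem16 (T : Type) (comp meet : T -> T -> T) (antidom : T -> T) :
  completely_representable comp meet antidom <->
  (representable comp meet antidom /\
   atomic comp meet antidom /\
   comp_complete_left_distributive comp meet).
Proof.
  split.
  - intros [U [R [HR Hcomp]]].
    pose proof HR as HR'. destruct HR' as [Hf [Hext [Hc [Hm Ha]]]].
    split; [exists U, R; exact HR|split].
    + intros a Hnz. apply NNPP. intros Hno.
      destruct (nonzero comp meet antidom R HR a Hnz) as [x [y Hxy]].
      set (S := fun z => le meet z a /\ ~ R z x y).
      assert (Hj : is_join meet S a).
      { split. { intros s [Hs _]. exact Hs. }
        intros u Hu. apply (leE comp meet antidom R HR). intros p q Hpq.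
        apply NNPP. intros Hnu.
        set (d := comp (antidom (meet a u)) a).
        assert (Hda : le meet d a).
        { apply (leE comp meet antidom R HR). intros r t Hr.
          apply (diffE comp meet antidom R HR) in Hr. tauto. }
        assert (Kill : forall f, le meet f d -> ~ is_zero comp antidom f -> ~ R f x y -> False).
        { intros f Hfd Hfz Hfx.
          destruct (nonzero comp meet antidom R HR f Hfz) as [r [t Hrt]].
          assert (Hf1 : R d r t) by (eapply (leE comp meet antidom R HR); eauto).
          apply (diffE comp meet antidom R HR) in Hf1. destruct Hf1 as [_ Hf1].
          apply Hf1. eapply (leE comp meet antidom R HR); [apply Hu | exact Hrt].
          split; auto. apply (leE comp meet antidom R HR). intros r' t' Hr'.
          eapply (leE comp meet antidom R HR); [exact Hda|].
          eapply (leE comp meet antidom R HR); eauto. }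
        assert (Hdz : ~ is_zero comp antidom d).
        { intros Hz. pose proof (proj1 (zeroE comp meet antidom R HR _) Hz) as Hz0; clear Hz; rename Hz0 into Hz. apply (Hz p q).
          apply (diffE comp meet antidom R HR). auto. }
        destruct (classic (R d x y)) as [Hdx|Hdx]; [|exact (Kill d (proj2 (leE comp meet antidom R HR d d) (fun _ _ h => h)) Hdz Hdx)].
        assert (Hna : ~ is_atom comp meet antidom d).
        { intros Hat. apply Hno. exists d. split; auto. }
        assert (Hex : exists c, le meet c d /\ ~ is_zero comp antidom c /\ c <> d).
        { apply NNPP. intros Hn. apply Hna. split; auto. intros c Hcd.
          destruct (classic (is_zero comp antidom c)); [left; auto|right].
          apply NNPP. intros Hne. apply Hn. eauto. }
        destruct Hex as [c [Hcd [Hcz Hcne]]].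
        destruct (classic (R c x y)) as [Hcx|Hcx]; [|exact (Kill c Hcd Hcz Hcx)].
        set (e := comp (antidom c) d).
        apply (Kill e).
        - apply (leE comp meet antidom R HR). intros r t Hr.
          apply (adomE comp meet antidom R HR) in Hr. tauto.
        - intros Hz. apply Hcne. apply Hext. intros r t. split.
          + intros Hr. eapply (leE comp meet antidom R HR); eauto.
          + intros Hr. destruct (classic (exists z, R c r z)) as [[z Hz']|Hnz'].
            * assert (R d r z) by (eapply (leE comp meet antidom R HR); eauto).
              assert (z = t) by (eapply (fnE comp meet antidom R HR); eauto). subst; auto.
            * exfalso. pose proof (proj1 (zeroE comp meet antidom R HR _) Hz) as Hz0; clear Hz; rename Hz0 into Hz. apply (Hz r t).
              apply (adomE comp meet antidom R HR). auto.
        - intros Hr. apply (adomE comp meet antidom R HR) in Hr. destruct Hr as [Hr _].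
          apply Hr. eauto. }
      apply (Hcomp S a Hj) in Hxy. destruct Hxy as [s [[_ Hs] Hsx]]. auto.
    + intros a S j Hj. split.
      * intros t [s [Hs ->]]. apply (leE comp meet antidom R HR). intros x z Hr.
        apply Hc in Hr. apply Hc. destruct Hr as [y [H1 H2]]. exists y. split; auto.
        eapply (leE comp meet antidom R HR); [apply (proj1 Hj); exact Hs | exact H2].
      * intros u Hu. apply (leE comp meet antidom R HR). intros x z Hr.
        apply Hc in Hr. destruct Hr as [y [H1 H2]].
        apply (Hcomp S j Hj) in H2. destruct H2 as [s [Hs H2]].
        eapply (leE comp meet antidom R HR); [apply Hu; exists s; split; [exact Hs|reflexivity]|].
        apply Hc. eauto.
  - intros [[U [R HR]] [Hat Hd]].
    pose proof HR as HR'. destruct HR' as [Hf [Hext [Hc [Hm Ha]]]].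
    set (V := {x : U | P comp meet antidom R x}).
    set (R' := fun a (x y : V) => R a (proj1_sig x) (proj1_sig y)).
    exists V, R'.
    assert (Hcl : forall b (x : V) y, R b (proj1_sig x) y -> P comp meet antidom R y).
    { intros b x y Hb. eapply P_closed; eauto. exact (proj2_sig x). }
    split; [split; [|split; [|split; [|split]]]|].
    + intros a x y z H1 H2. apply eq_sig_hprop; [intros; apply proof_irrelevance|].
      eapply (fnE comp meet antidom R HR); eauto.
    + intros a b Hab. apply Hext. intros x y. split.
      * apply (sep comp meet antidom R HR a b Hat). intros x' y' Hx' Hr.
        pose proof (Hcl a (exist _ x' Hx') y' Hr) as Hy'.
        exact (proj1 (Hab (exist _ x' Hx') (exist _ y' Hy')) Hr).
      * apply (sep comp meet antidom R HR b a Hat). intros x' y' Hx' Hr.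
        pose proof (Hcl b (exist _ x' Hx') y' Hr) as Hy'.
        exact (proj2 (Hab (exist _ x' Hx') (exist _ y' Hy')) Hr).
    + intros a b x z. unfold R'. rewrite Hc. split.
      * intros [y [H1 H2]]. exists (exist _ y (Hcl a x y H1)). simpl. auto.
      * intros [y [H1 H2]]. eauto.
    + intros a b x y. unfold R'. apply Hm.
    + intros a x y. unfold R'. rewrite Ha. split.
      * intros [E H1]. split.
        -- apply eq_sig_hprop; [intros; apply proof_irrelevance|exact E].
        -- intros [z Hz]. apply H1. eauto.
      * intros [E H1]. subst y. split; auto. intros [z Hz]. apply H1.
        exists (exist _ z (Hcl a x z Hz)). exact Hz.
    + intros S j Hj x y. unfold R'. split.
      * intros Hr. destruct (proj2_sig x j (ex_intro _ _ Hr)) as [g [Hg [Hgj [v Hv]]]].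
        assert (v = proj1_sig y).
        { eapply (fnE comp meet antidom R HR); [|exact Hr]. eapply (leE comp meet antidom R HR); eauto. }
        subst v.
        destruct (atom_below_join comp meet antidom R HR S j g Hj Hg Hgj) as [s [Hs Hgs]].
        exists s. split; auto. eapply (leE comp meet antidom R HR); eauto.
      * intros [s [Hs Hr]]. eapply (leE comp meet antidom R HR); [apply (proj1 Hj); exact Hs|exact Hr].
Qed.
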